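(* Let $s$ be a state, let $B$ be a formula of $\mathcal L_{class}$ with at most the free variable $x$, and let $t_1,t_2,u_1,u_2$ be closed terms of $\mathcal T_{class}$ (with $u_1,u_2$ of the type of $x$ and $t_j$ of type $|B[u_j/x]|$). If $t_1[s]=t_2[s]$ and $u_1[s]=u_2[s]$, then $t_1\Vvdash_s B[u_1/x]$ if and only if $t_2\Vvdash_s B[u_2/x]$.
   Context: Updates: an update is a finite set $U$ of triples of natural numbers forming the graph of a partial function $\mathbb N^2\to\mathbb N$. System $\mathcal T$ is Gödel's System T (types $\mathsf N,\mathsf{Bool}$, $\sigma\to\tau$, $\sigma\times\tau$; pairs $\langle\cdot,\cdot\rangle$, projections $\pi_0,\pi_1$; constants $0,\mathsf S,\mathsf{True},\mathsf{False},\mathsf{if}_\tau,\mathsf{rec}_\tau$ with the usual reductions) extended with a base type $\mathsf U$, a constant $\overline U:\mathsf U$ for each update $U$ ($\varnothing$ denotes $\overline{\emptyset}$), and constants $\min,\mathsf{get},\mathsf{mkupd},\cup$ computing respectively the least first component of a triple of an update (0 if empty), the value of an update at a pair (with a default), the singleton update $\{(a,n,m)\}$, and the consistent union ($U_1\cup U_2$ minus the triples of $U_2$ inconsistent with some triple of $U_1$). Terms of $\mathcal T$ are strongly normalizing with unique normal forms; for terms $t_1,t_2$ of $\mathcal T$, $t_1=t_2$ means they have the same normal form; closed normal terms of type $\mathsf N,\mathsf{Bool},\mathsf U$ are numerals, booleans, update constants. $\mathcal T_{class}$ is $\mathcal T$ plus countably many constants $\Phi_0,\Phi_1,\dots:\mathsf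 N\to\mathsf N$ without reduction rules. A state is a closed term $s:\mathsf N\to\mathsf N\to\mathsf N$ of $\mathcal T$; $s_i:=s(i)$; for $t\in\mathcal T_{class}$, $t[s]$ is obtained by replacing each $\Phi_i$ by $s_i$. Formulas of $\mathcal L_{class}$: atomic formulas are terms of $\mathcal T_{class}$ of type $\mathsf{Bool}$; formulas are built with $\land,\lor,\rightarrow,\mathbin{-}$ (co-implication, ''$A$ and not $B$''), $\forall x^\tau,\exists x^\tau$. A formula is arithmetical if it contains no $\Phi_i$, its quantifiers range over $\mathsf N$ and its atoms are terms of $\mathcal T$. Involutive negation: an atom is positive if it is $\neg_{\mathsf{Bool}}\cdots\neg_{\mathsf{Bool}}Q$ with an even number of negations and $Q$ not a negation; $P^\bot=\neg_{\mathsf{Bool}}P$ and $(\neg_{\mathsf{Bool}}P)^\bot=P$ for positive $P$; $(A\land B)^\bot=A^\bot\lor B^\bot$, $(A\lor B)^\bot=A^\bot\land B^\bot$, $(A\to B)^\bot=A\mathbin{-}B$, $(A\mathbin{-}B)^\bot=A\to B$, $(\forall xA)^\bot=\exists xA^\bot$, $(\exists xA)^\bot=\forall xA^\bot$. $\langle\vec x\rangle$ is a term of $\mathcal T$ coding an injection $\mathbb N^k\to\mathbb N$, bijective on numerals. Each arithmetical $A(\vec x,y)$ has exactly one associated Skolem constant $\Phi_A$ (distinct formulas, distinct constants). Truth value: for arithmetical $F$ with free variables $\vec x$, a term $\llbracket F\rrbracket:\mathsf{Bool}$ of $\mathcal T_{class}$: $\llbracket P\rrbracket=P$; $\llbracket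 A\lor B\rrbracket=\llbracket A\rrbracket\lor_{\mathsf{Bool}}\llbracket B\rrbracket$; $\llbracket A\land B\rrbracket=\llbracket A\rrbracket\land_{\mathsf{Bool}}\llbracket B\rrbracket$; $\llbracket A\to B\rrbracket=\llbracket A\rrbracket\Rightarrow_{\mathsf{Bool}}\llbracket B\rrbracket$; $\llbracket A\mathbin{-}B\rrbracket=\llbracket A\rrbracket\land_{\mathsf{Bool}}\llbracket B^\bot\rrbracket$; $\llbracket \exists y A\rrbracket=\llbracket A\rrbracket[\Phi_A\langle\vec x\rangle/y]$; $\llbracket \forall y A\rrbracket=\llbracket A\rrbracket[\Phi_{A^\bot}\langle\vec x\rangle/y]$. $\llbracket F\rrbracket_s:=\llbracket F\rrbracket[s]$. $\Gamma$ is a fixed arbitrary finite set of arithmetical formulas. Types of realizers: $|P|=\mathsf U$ for atomic $P$, $|A\land B|=|A|\times|B|$, $|A\lor B|=\mathsf{Bool}\times(|A|\times|B|)$, $|A\to B|=|A|\to|B|$, $|A\mathbin{-}B|=|A|\times|B^\bot|$, $|\forall x^\tau A|=\tau\to|A|$, $|\exists x^\tau A|=\tau\times|A|$. Let $p_0=\pi_0$, $p_1=\pi_0\pi_1$, $p_2=\pi_1\pi_1$. For a state $s$, closed $t\in\mathcal T_{class}$ and closed $F$ with $t:|F|$, $t\Vvdash_s F$ is defined by: (atomic $Q$) if $t[s]=\overline U$ then every $(i,\langle\vec n\rangle,m)\in U$ has $\Phi_i=\Phi_A$ for some $A\in\Gamma$ with $\llbracket A\rrbracket_s(\vec n,s_i\langle\vec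 n\rangle)=\mathsf{False}$ and $\llbracket A\rrbracket_s(\vec n,m)=\mathsf{True}$, and $t[s]=\varnothing$ implies $Q[s]=\mathsf{True}$; $t\Vvdash_s A\land B$ iff $\pi_0t\Vvdash_sA$ and $\pi_1t\Vvdash_sB$; $t\Vvdash_sA\lor B$ iff either $p_0t[s]=\mathsf{True}$ and $p_1t\Vvdash_sA$, or $p_0t[s]=\mathsf{False}$ and $p_2t\Vvdash_sB$; $t\Vvdash_sA\to B$ iff for all $u$, $u\Vvdash_sA$ implies $tu\Vvdash_sB$; $t\Vvdash_sA\mathbin{-}B$ iff $\pi_0t\Vvdash_sA$ and $\pi_1t\Vvdash_sB^\bot$; $t\Vvdash_s\forall x^\tau A$ iff $tu\Vvdash_sA[u/x]$ for all closed $u:\tau$ of $\mathcal T$; $t\Vvdash_s\exists x^\tau A$ iff for some closed $u:\tau$ of $\mathcal T$, $\pi_0t[s]=u$ and $\pi_1t\Vvdash_sA[u/x]$. *)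

(* Defs.v *)
From HB Require Import structures.
From mathcomp Require Import all_boot finmap.
From Stdlib Require List.

Set Implicit Arguments.
Unset Strict Implicit.
Unset Printing Implicit Defensive.

Local Open Scope fset_scope.

(* Updates: finite sets of triples ((a,n),m) that are the graph of a   *)
(* partial function N^2 -> N.                                           *)

Definition triple := ((nat * nat) * nat)%type.

Definition functionalb (U : {fset triple}) : bool :=
  all (fun x : triple => all (fun y : triple => (x.1 == y.1) ==> (x.2 == y.2))
                             (enum_fset U))
      (enum_fset U).

Definition update := {U : {fset triple} | functionalb U}.

Definition umin (U : {fset triple}) : nat :=
  match [seq x.1.1 | x <- enum_fset U] with
  | [::] => 0
  | a :: l => foldr minn a l
  end.

Definition uget (U : {fset triple}) (a n d : nat) : nat :=
  head d [seq x.2 | x <- enum_fset U & x.1 == (a, n)].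

Definition ucup (U1 U2 : {fset triple}) : {fset triple} :=
  U1 `|` [fset y in U2 | all (fun x : triple => (x.1 == y.1) ==> (x.2 == y.2))
                              (enum_fset U1)].

(* System T extended with updates (T), and T_class (constants Phi_i).  *)

Inductive ty : Type :=
| TN | TBool | TU
| TArr (a b : ty)
| TProd (a b : ty).

Inductive term : Type :=
| Var (n : nat)
| App (t u : term)
| Lam (a : ty) (t : term)
| Pair (t u : term)
| Pi0 (t : term)
| Pi1 (t : term)
| Zero
| Succ
| TrueC | FalseC
| IfC (a : ty)
| RecC (a : ty)
| UpdC (U : update)
| MinC
| GetC
| MkupdC
| CupC
| Phi (i : nat).

Fixpoint num (k : nat) : term :=
  match k with 0 => Zero | k'.+1 => App Succ (num k') end.

Fixpoint isT (t : term) : bool :=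
  match t with
  | App a b | Pair a b => isT a && isT b
  | Lam _ b | Pi0 b | Pi1 b => isT b
  | Phi _ => false
  | _ => true
  end.

Fixpoint lift (d c : nat) (t : term) : term :=
  match t with
  | Var n => if c <= n then Var (n + d) else Var n
  | App a b => App (lift d c a) (lift d c b)
  | Lam T b => Lam T (lift d c.+1 b)
  | Pair a b => Pair (lift d c a) (lift d c b)
  | Pi0 b => Pi0 (lift d c b)
  | Pi1 b => Pi1 (lift d c b)
  | _ => t
  end.

Fixpoint subst (k : nat) (u t : term) : term :=
  match t with
  | Var n => if n < k then Var n else if n == k then lift k 0 u else Var n.-1
  | App a b => App (subst k u a) (subst k u b)
  | Lam T b => Lam T (subst k.+1 u b)
  | Pair a b => Pair (subst k u a) (subst k u b)
  | Pi0 b => Pi0 (subst k u b)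
  | Pi1 b => Pi1 (subst k u b)
  | _ => t
  end.

(* simultaneous substitution of closed terms us for variables 0,1,... *)
Fixpoint substs (us : seq term) (t : term) : term :=
  match us with [::] => t | u :: us' => substs us' (subst 0 u t) end.

Inductive has_type (G : seq ty) : term -> ty -> Prop :=
| hty_var n : n < size G -> has_type G (Var n) (nth TN G n)
| hty_app t u a b : has_type G t (TArr a b) -> has_type G u a -> has_type G (App t u) b
| hty_lam t a b : has_type (a :: G) t b -> has_type G (Lam a t) (TArr a b)
| hty_pair t u a b : has_type G t a -> has_type G u b -> has_type G (Pair t u) (TProd a b)
| hty_pi0 t a b : has_type G t (TProd a b) -> has_type G (Pi0 t) a
| hty_pi1 t a b : has_type G t (TProd a b) -> has_type G (Pi1 t) b
| hty_zero : has_type G Zero TN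
| hty_succ : has_type G Succ (TArr TN TN)
| hty_true : has_type G TrueC TBool
| hty_false : has_type G FalseC TBool
| hty_if a : has_type G (IfC a) (TArr TBool (TArr a (TArr a a)))
| hty_rec a : has_type G (RecC a) (TArr a (TArr (TArr TN (TArr a a)) (TArr TN a)))
| hty_upd U : has_type G (UpdC U) TU
| hty_min : has_type G MinC (TArr TU TN)
| hty_get : has_type G GetC (TArr TU (TArr TN (TArr TN (TArr TN TN))))
| hty_mkupd : has_type G MkupdC (TArr TN (TArr TN (TArr TN TU)))
| hty_cup : has_type G CupC (TArr TU (TArr TU TU))
| hty_phi i : has_type G (Phi i) (TArr TN TN).

Inductive red1 : term -> term -> Prop :=
| r_beta a t u : red1 (App (Lam a t) u) (subst 0 u t)
| r_pi0 t u : red1 (Pi0 (Pair t u)) t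
| r_pi1 t u : red1 (Pi1 (Pair t u)) u
| r_ift a t u : red1 (App (App (App (IfC a) TrueC) t) u) t
| r_iff a t u : red1 (App (App (App (IfC a) FalseC) t) u) u
| r_rec0 a t f : red1 (App (App (App (RecC a) t) f) Zero) t
| r_recS a t f n :
    red1 (App (App (App (RecC a) t) f) (App Succ n))
         (App (App f n) (App (App (App (RecC a) t) f) n))
| r_min U : red1 (App MinC (UpdC U)) (num (umin (sval U)))
| r_get U a n d :
    red1 (App (App (App (App GetC (UpdC U)) (num a)) (num n)) (num d))
         (num (uget (sval U) a n d))
| r_mkupd a n m V : sval V = [fset ((a, n), m)] ->
    red1 (App (App (App MkupdC (num a)) (num n)) (num m)) (UpdC V)
| r_cup U1 U2 V : sval V = ucup (sval U1) (sval U2) ->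
    red1 (App (App CupC (UpdC U1)) (UpdC U2)) (UpdC V)
| r_appl t t' u : red1 t t' -> red1 (App t u) (App t' u)
| r_appr t u u' : red1 u u' -> red1 (App t u) (App t u')
| r_lam a t t' : red1 t t' -> red1 (Lam a t) (Lam a t')
| r_pairl t t' u : red1 t t' -> red1 (Pair t u) (Pair t' u)
| r_pairr t u u' : red1 u u' -> red1 (Pair t u) (Pair t u')
| r_pi0c t t' : red1 t t' -> red1 (Pi0 t) (Pi0 t')
| r_pi1c t t' : red1 t t' -> red1 (Pi1 t) (Pi1 t').

Inductive reds : term -> term -> Prop :=
| reds_refl t : reds t t
| reds_step t t' t'' : red1 t t' -> reds t' t'' -> reds t t''.

Definition normal (t : term) : Prop := forall t', ~ red1 t t'.

Definition teq (t1 t2 : term) : Prop :=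
  exists n, reds t1 n /\ reds t2 n /\ normal n.

Definition is_state (s : term) : Prop :=
  has_type [::] s (TArr TN (TArr TN TN)) /\ isT s.

Fixpoint tsub (s t : term) : term :=
  match t with
  | Phi i => App s (num i)
  | App a b => App (tsub s a) (tsub s b)
  | Lam T b => Lam T (tsub s b)
  | Pair a b => Pair (tsub s a) (tsub s b)
  | Pi0 b => Pi0 (tsub s b)
  | Pi1 b => Pi1 (tsub s b)
  | _ => t
  end.

Definition notB : term := Lam TBool (App (App (App (IfC TBool) (Var 0)) FalseC) TrueC).
Definition andB (a b : term) : term := App (App (App (IfC TBool) a) b) FalseC.
Definition orB (a b : term) : term := App (App (App (IfC TBool) a) TrueC) b.
Definition impB (a b : term) : term := App (App (App (IfC TBool) a) b) TrueC.

Fixpoint negs (P : term) : nat :=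
  match P with
  | App (Lam TBool (App (App (App (IfC TBool) (Var 0)) FalseC) TrueC)) Q => (negs Q).+1
  | _ => 0
  end.

Inductive formula : Type :=
| FAtom (P : term)
| FAnd (A B : formula)
| FOr (A B : formula)
| FImp (A B : formula)
| FCoimp (A B : formula)
| FAll (a : ty) (A : formula)
| FEx (a : ty) (A : formula).

Fixpoint fsize (F : formula) : nat :=
  match F with
  | FAtom _ => 1
  | FAnd A B | FOr A B | FImp A B | FCoimp A B => (fsize A + fsize B).+1
  | FAll _ A | FEx _ A => (fsize A).+1
  end.

Fixpoint fwf (G : seq ty) (F : formula) : Prop :=
  match F with
  | FAtom P => has_type G P TBool
  | FAnd A B | FOr A B | FImp A B | FCoimp A B => fwf G A /\ fwf G B
  | FAll a A | FEx a A => fwf (a :: G) A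
  end.

Fixpoint fsubst (k : nat) (u : term) (F : formula) : formula :=
  match F with
  | FAtom P => FAtom (subst k u P)
  | FAnd A B => FAnd (fsubst k u A) (fsubst k u B)
  | FOr A B => FOr (fsubst k u A) (fsubst k u B)
  | FImp A B => FImp (fsubst k u A) (fsubst k u B)
  | FCoimp A B => FCoimp (fsubst k u A) (fsubst k u B)
  | FAll a A => FAll a (fsubst k.+1 u A)
  | FEx a A => FEx a (fsubst k.+1 u A)
  end.

Fixpoint arith (F : formula) : bool :=
  match F with
  | FAtom P => isT P
  | FAnd A B | FOr A B | FImp A B | FCoimp A B => arith A && arith B
  | FAll TN A | FEx TN A => arith A
  | _ => false
  end.

Definition perp_atom (P : term) : term :=
  if odd (negs P) then (match P with App _ Q => Q | _ => P end) else App notB P.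

Fixpoint perp (F : formula) : formula :=
  match F with
  | FAtom P => FAtom (perp_atom P)
  | FAnd A B => FOr (perp A) (perp B)
  | FOr A B => FAnd (perp A) (perp B)
  | FImp A B => FCoimp A B
  | FCoimp A B => FImp A B
  | FAll a A => FEx a (perp A)
  | FEx a A => FAll a (perp A)
  end.

(*  sk n A : index i of the Skolem constant Phi_A = Phi_i of the       *)
(*           arithmetical formula A(x_1..x_n, y) (A in a context of    *)
(*           n+1 variables, y = Var 0, x_j = Var j)                     *)
(*  code k : the term <x_1..x_k> of T, in a context of k variables     *)

Definition skolem_ok (sk : nat -> formula -> nat) : Prop :=
  forall n1 A1 n2 A2, arith A1 -> arith A2 ->
    sk n1 A1 = sk n2 A2 -> n1 = n2 /\ A1 = A2.

Definition code_ok (code : nat -> term) : Prop :=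
  forall k,
    has_type (nseq k TN) (code k) TN /\ isT (code k) /\
    (forall ns, size ns = k -> exists c, teq (substs (map num ns) (code k)) (num c)) /\
    (forall ns1 ns2 c, size ns1 = k -> size ns2 = k ->
       teq (substs (map num ns1) (code k)) (num c) ->
       teq (substs (map num ns2) (code k)) (num c) -> ns1 = ns2) /\
    (0 < k -> forall c, exists ns, size ns = k /\
       teq (substs (map num ns) (code k)) (num c)).

Section Semantics.
Variables (sk : nat -> formula -> nat) (code : nat -> term).

(* truth value [[F]] of an arithmetical formula F in a context of n
   variables (fuel k >= fsize F) *)
Fixpoint truth_f (k n : nat) (F : formula) : term :=
  match k with
  | 0 => FalseC
  | k'.+1 =>
    match F with
    | FAtom P => P
    | FAnd A B => andB (truth_f k' n A) (truth_f k' n B)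
    | FOr A B => orB (truth_f k' n A) (truth_f k' n B)
    | FImp A B => impB (truth_f k' n A) (truth_f k' n B)
    | FCoimp A B => andB (truth_f k' n A) (truth_f k' n (perp B))
    | FEx _ A => subst 0 (App (Phi (sk n A)) (code n)) (truth_f k' n.+1 A)
    | FAll _ A => subst 0 (App (Phi (sk n (perp A))) (code n)) (truth_f k' n.+1 A)
    end
  end.

Definition truth (n : nat) (F : formula) : term := truth_f (fsize F) n F.

Definition truth_at (s : term) (n : nat) (A : formula) (ns : seq nat) (y : term) : term :=
  tsub s (substs (y :: map num ns) (truth n.+1 A)).

Fixpoint rtype_f (k : nat) (F : formula) : ty :=
  match k with
  | 0 => TU
  | k'.+1 =>
    match F with
    | FAtom _ => TU
    | FAnd A B => TProd (rtype_f k' A) (rtype_f k' B)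
    | FOr A B => TProd TBool (TProd (rtype_f k' A) (rtype_f k' B))
    | FImp A B => TArr (rtype_f k' A) (rtype_f k' B)
    | FCoimp A B => TProd (rtype_f k' A) (rtype_f k' (perp B))
    | FAll a A => TArr a (rtype_f k' A)
    | FEx a A => TProd a (rtype_f k' A)
    end
  end.

Definition rtype (F : formula) : ty := rtype_f (fsize F) F.

Variable (Gam : seq (nat * formula)).

Fixpoint real_f (k : nat) (s t : term) (F : formula) : Prop :=
  match k with
  | 0 => False
  | k'.+1 =>
    match F with
    | FAtom Q =>
        (forall U : update, teq (tsub s t) (UpdC U) ->
           forall i c m, ((i, c), m) \in sval U ->
           exists n A ns,
             List.In (n, A) Gam /\ i = sk n A /\ size ns = n /\
             teq (substs (map num ns) (code n)) (num c) /\
             teq (truth_at s n A ns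
                    (App (App s (num i)) (substs (map num ns) (code n)))) FalseC /\
             teq (truth_at s n A ns (num m)) TrueC) /\
        (forall U : update, teq (tsub s t) (UpdC U) -> sval U = fset0 ->
           teq (tsub s Q) TrueC)
    | FAnd A B => real_f k' s (Pi0 t) A /\ real_f k' s (Pi1 t) B
    | FOr A B =>
        (teq (tsub s (Pi0 t)) TrueC /\ real_f k' s (Pi0 (Pi1 t)) A) \/
        (teq (tsub s (Pi0 t)) FalseC /\ real_f k' s (Pi1 (Pi1 t)) B)
    | FImp A B =>
        forall u, has_type [::] u (rtype A) ->
          real_f k' s u A -> real_f k' s (App t u) B
    | FCoimp A B => real_f k' s (Pi0 t) A /\ real_f k' s (Pi1 t) (perp B)
    | FAll a A =>
        forall u, has_type [::] u a -> isT u -> real_f k' s (App t u) (fsubst 0 u A)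
    | FEx a A =>
        exists u, has_type [::] u a /\ isT u /\
          teq (tsub s (Pi0 t)) u /\ real_f k' s (Pi1 t) (fsubst 0 u A)
    end
  end.

Definition realizes (s t : term) (F : formula) : Prop := real_f (fsize F) s t F.

End Semantics.

(* Main.v *)
Require Import Defs.
From HB Require Import structures.
From mathcomp Require Import all_boot finmap.
From Stdlib Require List.
From mathcomp Require Import zify.
Import Defs.

Set Implicit Arguments.
Unset Strict Implicit.
Unset Printing Implicit Defensive.

Ltac ifs := repeat (match goal with |- context [if ?b then _ else _] =>
   let E := fresh "E" in case E: b end).

Lemma lift0 t c : lift 0 c t = t.
Proof. elim: t c => //= [n|t IH u IH2|a t IH|t IH u IH2|t IH|t IH] c;
  rewrite ?IH ?IH2 //; ifs => //; by rewrite addn0. Qed.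

Lemma lift_lift_comm t d k c j : j <= c ->
  lift d (c + k) (lift k j t) = lift k j (lift d c t).
Proof.
elim: t d k c j => //= [n|t IH u IH2|a t IH|t IH u IH2|t IH|t IH] d k c j hj;
  rewrite ?IH ?IH2 //.
- ifs => //=; ifs => //=; try (f_equal; lia); exfalso; lia.
- by rewrite -addSn IH.
Qed.

Lemma lift_lift_comp t c j k i : i <= j -> j <= i + k ->
  lift c j (lift k i t) = lift (c + k) i t.
Proof.
elim: t c j k i => //= [n|t IH u IH2|a t IH|t IH u IH2|t IH|t IH] c j k i h1 h2;
  rewrite ?IH ?IH2 //.
- ifs => //=; ifs => //=; try (f_equal; lia); exfalso; lia.
Qed.

Lemma subst_lift_comm t c k u j : j <= k ->
  subst (c + k) u (lift c j t) = lift c j (subst k u t).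
Proof.
elim: t c k u j => //= [n|t IH u IH2|a t IH|t IH u IH2|t IH|t IH] c k v j hj;
  rewrite ?IH ?IH2 //.
- ifs => //=; ifs => //=; try (f_equal; lia); try (exfalso; lia).
  rewrite lift_lift_comp; [f_equal; lia| lia| lia].
- by rewrite -addnS IH.
Qed.

Lemma subst_lift_cancel t c w d j : j <= c -> c <= j + d ->
  subst c w (lift d.+1 j t) = lift d j t.
Proof.
elim: t c w d j => //= [n|t IH u IH2|a t IH|t IH u IH2|t IH|t IH] c w d j h1 h2;
  rewrite ?IH ?IH2 //.
- ifs => //=; ifs => //=; try (f_equal; lia); exfalso; lia.
Qed.

Lemma lift_subst_comm t d k c u :
  lift d (k + c) (subst k u t) = subst k (lift d c u) (lift d (k + c).+1 t).
Proof.
elim: t d k c u => //= [n|t IH u IH2|a t IH|t IH u IH2|t IH|t IH] d k c v;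
  rewrite ?IH ?IH2 //.
- ifs => //=; ifs => //=; try (f_equal; lia); try (exfalso; lia).
  by rewrite (addnC k c) lift_lift_comm.
- by rewrite -addSn IH.
Qed.

Lemma subst_subst_comm t c k u v :
  subst (c + k) u (subst c v t) = subst c (subst k u v) (subst (c + k).+1 u t).
Proof.
elim: t c k u v => //= [n|t IH t2 IH2|a t IH|t IH t2 IH2|t IH|t IH] c k u v;
  rewrite ?IH ?IH2 //.
- ifs => //=; ifs => //=; try (f_equal; lia); try (exfalso; lia).
  + rewrite subst_lift_comm //.
  + rewrite subst_lift_cancel //; lia.
- by rewrite -addSn IH.
Qed.

Local Open Scope fset_scope.

Definition atomic (t : term) : bool :=
  match t with App _ _ | Lam _ _ | Pair _ _ | Pi0 _ | Pi1 _ => false | _ => true end.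

Inductive par : term -> term -> Prop :=
| p_atom t : atomic t -> par t t
| p_app t t' u u' : par t t' -> par u u' -> par (App t u) (App t' u')
| p_lam a t t' : par t t' -> par (Lam a t) (Lam a t')
| p_pair t t' u u' : par t t' -> par u u' -> par (Pair t u) (Pair t' u')
| p_pi0 t t' : par t t' -> par (Pi0 t) (Pi0 t')
| p_pi1 t t' : par t t' -> par (Pi1 t) (Pi1 t')
| p_beta a t t' u u' : par t t' -> par u u' -> par (App (Lam a t) u) (subst 0 u' t')
| p_pi0r t t' u : par t t' -> par (Pi0 (Pair t u)) t'
| p_pi1r t u u' : par u u' -> par (Pi1 (Pair t u)) u'
| p_ift a t t' u : par t t' -> par (App (App (App (IfC a) TrueC) t) u) t'
| p_iff a t u u' : par u u' -> par (App (App (App (IfC a) FalseC) t) u) u'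
| p_rec0 a t t' f : par t t' -> par (App (App (App (RecC a) t) f) Zero) t'
| p_recS a t t' f f' n n' : par t t' -> par f f' -> par n n' ->
    par (App (App (App (RecC a) t) f) (App Succ n))
        (App (App f' n') (App (App (App (RecC a) t') f') n'))
| p_min U : par (App MinC (UpdC U)) (num (umin (sval U)))
| p_get U a n d :
    par (App (App (App (App GetC (UpdC U)) (num a)) (num n)) (num d))
        (num (uget (sval U) a n d))
| p_mkupd a n m V : sval V = [fset ((a, n), m)] ->
    par (App (App (App MkupdC (num a)) (num n)) (num m)) (UpdC V)
| p_cup U1 U2 V : sval V = ucup (sval U1) (sval U2) ->
    par (App (App CupC (UpdC U1)) (UpdC U2)) (UpdC V).

Lemma par_refl t : par t t.
Proof. elim: t => *; try (by apply: p_atom); by constructor. Qed.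

Lemma red1_par t t' : red1 t t' -> par t t'.
Proof.
elim => *; first
  [ by apply: p_beta; apply: par_refl
  | by apply: p_pi0r; apply: par_refl
  | by apply: p_pi1r; apply: par_refl
  | by apply: p_ift; apply: par_refl
  | by apply: p_iff; apply: par_refl
  | by apply: p_rec0; apply: par_refl
  | by apply: p_recS; apply: par_refl
  | by apply: p_min | by apply: p_get
  | by apply: p_mkupd
  | by apply: p_cup
  | by apply: p_app => //; apply: par_refl
  | by apply: p_lam
  | by apply: p_pair => //; apply: par_refl
  | by apply: p_pi0
  | by apply: p_pi1 ].
Qed.

Lemma reds_trans t1 t2 t3 : reds t1 t2 -> reds t2 t3 -> reds t1 t3.
Proof. elim => // a b c H _ IH /IH. by apply: reds_step. Qed.

Lemma red1_reds t t' : red1 t t' -> reds t t'.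
Proof. move=> H; apply: reds_step H (reds_refl _). Qed.

Lemma reds_ctx (f : term -> term) :
  (forall a b, red1 a b -> red1 (f a) (f b)) ->
  forall a b, reds a b -> reds (f a) (f b).
Proof. move=> Hf a b; elim => [t|x y z H _ IH]; first by apply: reds_refl.
by apply: reds_step (Hf _ _ H) IH. Qed.

Lemma reds_app t t' u u' : reds t t' -> reds u u' -> reds (App t u) (App t' u').
Proof.
move=> H1 H2; apply: (@reds_trans _ (App t' u)).
- exact: (@reds_ctx (fun x => App x u) (fun a b H => r_appl u H) _ _ H1).
- exact: (@reds_ctx (fun x => App t' x) (fun a b H => r_appr t' H) _ _ H2).
Qed.

Lemma reds_pair t t' u u' : reds t t' -> reds u u' -> reds (Pair t u) (Pair t' u').
Proof.
move=> H1 H2; apply: (@reds_trans _ (Pair t' u)).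
- exact: (@reds_ctx (fun x => Pair x u) (fun a b H => r_pairl u H) _ _ H1).
- exact: (@reds_ctx (fun x => Pair t' x) (fun a b H => r_pairr t' H) _ _ H2).
Qed.

Lemma reds_lam a t t' : reds t t' -> reds (Lam a t) (Lam a t').
Proof. exact: (@reds_ctx (fun x => Lam a x) (fun a' b H => r_lam a H)). Qed.
Lemma reds_pi0 t t' : reds t t' -> reds (Pi0 t) (Pi0 t').
Proof. exact: (@reds_ctx (fun x => Pi0 x) (fun a' b H => r_pi0c H)). Qed.
Lemma reds_pi1 t t' : reds t t' -> reds (Pi1 t) (Pi1 t').
Proof. exact: (@reds_ctx (fun x => Pi1 x) (fun a' b H => r_pi1c H)). Qed.

Lemma par_reds t t' : par t t' -> reds t t'.
Proof.
elim => {t t'} *; try by apply: reds_refl.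
- by apply: reds_app.
- by apply: reds_lam.
- by apply: reds_pair.
- by apply: reds_pi0.
- by apply: reds_pi1.
- apply: reds_trans; first by apply: reds_app; [apply: reds_lam; eassumption| eassumption].
  by apply: red1_reds; apply: r_beta.
- apply: reds_trans; last eassumption. apply: red1_reds; apply: r_pi0.
- apply: reds_trans; last eassumption. apply: red1_reds; apply: r_pi1.
- apply: reds_trans; last eassumption. apply: red1_reds; apply: r_ift.
- apply: reds_trans; last eassumption. apply: red1_reds; apply: r_iff.
- apply: reds_trans; last eassumption. apply: red1_reds; apply: r_rec0.
- apply: reds_trans.
  apply: reds_app; last by apply: reds_app; [apply: reds_refl|eassumption].
  apply: reds_app; last eassumption. apply: reds_app; [apply: reds_refl|eassumption].
  apply: red1_reds; apply: r_recS.
- apply: red1_reds; apply: r_min.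
- apply: red1_reds; apply: r_get.
- apply: red1_reds; by apply: r_mkupd.
- apply: red1_reds; by apply: r_cup.
Qed.

Lemma lift_num d c k : lift d c (num k) = num k.
Proof. by elim: k => //= k ->. Qed.
Lemma subst_num j u k : subst j u (num k) = num k.
Proof. by elim: k => //= k ->. Qed.

Lemma par_lift t t' : par t t' -> forall d c, par (lift d c t) (lift d c t').
Proof.
elim => {t t'} /=.
- move=> t At d c; apply: p_atom; by case: t At => //= n _; ifs.
- by intros; apply: p_app.
- by intros; apply: p_lam.
- by intros; apply: p_pair.
- by intros; apply: p_pi0.
- by intros; apply: p_pi1.
- move=> a t t' u u' _ IH1 _ IH2 d c.
  have := lift_subst_comm t' d 0 c u'; rewrite add0n => ->.
  by apply: p_beta.
- by intros; apply: p_pi0r.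
- by intros; apply: p_pi1r.
- by intros; apply: p_ift.
- by intros; apply: p_iff.
- by intros; apply: p_rec0.
- by intros; apply: p_recS.
- move=> *; rewrite !lift_num; apply: p_min.
- move=> *; rewrite !lift_num; apply: p_get.
- move=> *; rewrite !lift_num; by apply: p_mkupd.
- move=> *; by apply: p_cup.
Qed.

Lemma par_subst t t' : par t t' -> forall u u' k, par u u' ->
  par (subst k u t) (subst k u' t').
Proof.
elim => {t t'} /=.
- move=> t At u u' k Hu; case: t At => //= *; try (by apply: p_atom).
  ifs; try (by apply: p_atom). by apply: par_lift.
- by intros; apply: p_app; auto.
- by intros; apply: p_lam; auto.
- by intros; apply: p_pair; auto.
- by intros; apply: p_pi0; auto.
- by intros; apply: p_pi1; auto.
- move=> a t t' v v' _ IH1 _ IH2 u u' k Hu.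
  have := subst_subst_comm t' 0 k u' v'; rewrite add0n => ->.
  by apply: p_beta; auto.
- by intros; apply: p_pi0r; auto.
- by intros; apply: p_pi1r; auto.
- by intros; apply: p_ift; auto.
- by intros; apply: p_iff; auto.
- by intros; apply: p_rec0; auto.
- by intros; apply: p_recS; auto.
- move=> *; rewrite !subst_num; apply: p_min.
- move=> *; rewrite !subst_num; apply: p_get.
- move=> *; rewrite !subst_num; by apply: p_mkupd.
- move=> *; by apply: p_cup.
Qed.

Fixpoint isnum (t : term) : option nat :=
  match t with Zero => Some 0 | App Succ t' => omap S (isnum t') | _ => None end.

Lemma isnumK t k : isnum t = Some k -> t = num k.
Proof.
elim: t k => //=; last first.
  by move=> k [<-].
move=> t1 _ t2 IH k; case: t1 => //.
by case E: (isnum t2) => [k'|] //= [<-]; rewrite (IH _ E).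
Qed.

Lemma isnum_num k : isnum (num k) = Some k.
Proof. by elim: k => //= k ->. Qed.

Definition upd_of (X : {fset triple}) : option update := insub X.

Lemma upd_ofP X V : upd_of X = Some V -> sval V = X.
Proof. rewrite /upd_of; case: insubP => [V0 _ HV|] // [] E; by rewrite -E. Qed.

Lemma upd_of_val X V : sval V = X -> upd_of X = Some V.
Proof. move=> <-; rewrite /upd_of. exact: valK. Qed.

Definition contract (t1 u ct cu : term) : term :=
  let dflt := App ct cu in
  match t1 with
  | Lam _ _ => match ct with Lam _ b' => subst 0 cu b' | _ => dflt end
  | MinC => match u with UpdC U => num (umin (sval U)) | _ => dflt end
  | App t2 y =>
    match t2 with
    | CupC => match y, u with
              | UpdC U1, UpdC U2 =>
                  match upd_of (ucup (sval U1) (sval U2)) with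
                  | Some V => UpdC V | None => dflt end
              | _, _ => dflt end
    | App t3 x =>
      match t3 with
      | IfC _ => match x with
                 | TrueC => match ct with App _ y' => y' | _ => dflt end
                 | FalseC => cu
                 | _ => dflt end
      | RecC a => match u with
                  | Zero => match ct with App (App _ x') _ => x' | _ => dflt end
                  | App Succ _ =>
                      match ct, cu with
                      | App (App _ x') y', App _ n' =>
                          App (App y' n') (App (App (App (RecC a) x') y') n')
                      | _, _ => dflt end
                  | _ => dflt end
      | MkupdC => match isnum x, isnum y, isnum u with
                  | Some a, Some n, Some m =>
                      match upd_of [fset ((a, n), m)] with
                      | Some V => UpdC V | None => dflt end
                  | _, _, _ => dflt end
      | App GetC (UpdC U) => match isnum x, isnum y, isnum u with
                  | Some a, Some n, Some d => num (uget (sval U) a n d)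
                  | _, _, _ => dflt end
      | _ => dflt
      end
    | _ => dflt
    end
  | _ => dflt
  end.

Fixpoint cd (t : term) : term :=
  match t with
  | App t1 u => contract t1 u (cd t1) (cd u)
  | Lam a b => Lam a (cd b)
  | Pair a b => Pair (cd a) (cd b)
  | Pi0 t1 => match t1 with Pair a _ => cd a | _ => Pi0 (cd t1) end
  | Pi1 t1 => match t1 with Pair _ b => cd b | _ => Pi1 (cd t1) end
  | _ => t
  end.

Inductive cd_app_spec (t u : term) : term -> Prop :=
| CDflt : cd_app_spec t u (App (cd t) (cd u))
| CBeta a b : t = Lam a b -> cd_app_spec t u (subst 0 (cd u) (cd b))
| CMin U : t = MinC -> u = UpdC U -> cd_app_spec t u (num (umin (sval U)))
| CCup U1 U2 V : t = App CupC (UpdC U1) -> u = UpdC U2 ->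
    sval V = ucup (sval U1) (sval U2) -> cd_app_spec t u (UpdC V)
| CIfT a y : t = App (App (IfC a) TrueC) y -> cd_app_spec t u (cd y)
| CIfF a y : t = App (App (IfC a) FalseC) y -> cd_app_spec t u (cd u)
| CRec0 a x y : t = App (App (RecC a) x) y -> u = Zero -> cd_app_spec t u (cd x)
| CRecS a x y n : t = App (App (RecC a) x) y -> u = App Succ n ->
    cd_app_spec t u (App (App (cd y) (cd n)) (App (App (App (RecC a) (cd x)) (cd y)) (cd n)))
| CMk a n m V : t = App (App MkupdC (num a)) (num n) -> u = num m ->
    sval V = [fset ((a, n), m)] -> cd_app_spec t u (UpdC V)
| CGet U a n d : t = App (App (App GetC (UpdC U)) (num a)) (num n) -> u = num d ->
    cd_app_spec t u (num (uget (sval U) a n d)).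

Lemma cdP t u : cd_app_spec t u (cd (App t u)).
Proof.
rewrite [cd (App _ _)]/=.
case: t => [n|t2 y|a b|p q|p|p|||||a|a|U|||||i]; try exact: CDflt.
- case: t2 => [n|t3 x|a b|p q|p|p|||||a|a|U|||||i]; try exact: CDflt.
  + case: t3 => [n|t4 w|a b|p q|p|p|||||a|a|U|||||i]; try exact: CDflt.
    * case: t4 => [n|t5 w'|a b|p q|p|p|||||a|a|U'|||||i]; try exact: CDflt.
      case: w => [n|t5 w'|a b|p q|p|p|||||a|a|U|||||i]; try exact: CDflt.
      rewrite [contract _ _ _ _]/=.
      case Ex: (isnum x) => [ka|]; last exact: CDflt.
      case Ey: (isnum y) => [kn|]; last exact: CDflt.
      case Eu: (isnum u) => [kd|]; last exact: CDflt.
      rewrite (isnumK Ex) (isnumK Ey) (isnumK Eu). exact: CGet.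
    * case: x => [n|t5 w'|a' b|p q|p|p|||||a'|a'|U|||||i]; try exact: CDflt.
      -- exact: CIfT.
      -- exact: CIfF.
    * case: u => [n|t5 w'|a' b|p q|p|p|||||a'|a'|U|||||i]; try exact: CDflt.
      -- case: t5 => [n|t6 w''|a' b|p q|p|p|||||a'|a'|U|||||i]; try exact: CDflt.
         exact: CRecS.
      -- exact: CRec0.
    * rewrite [contract _ _ _ _]/=.
      case Ex: (isnum x) => [ka|]; last exact: CDflt.
      case Ey: (isnum y) => [kn|]; last exact: CDflt.
      case Eu: (isnum u) => [kd|]; last exact: CDflt.
      case EV: (upd_of _) => [V|]; last exact: CDflt.
      rewrite (isnumK Ex) (isnumK Ey) (isnumK Eu). apply: CMk => //.
      exact: upd_ofP EV.
  + case: y => [n|t5 w'|a' b|p q|p|p|||||a'|a'|U1|||||i]; try exact: CDflt.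
    case: u => [n|t5 w'|a' b|p q|p|p|||||a'|a'|U2|||||i]; try exact: CDflt.
    rewrite [contract _ _ _ _]/=.
    case EV: (upd_of _) => [V|]; last exact: CDflt.
    apply: CCup => //. exact: upd_ofP EV.
- exact: CBeta.
- case: u => [n|t5 w'|a' b|p q|p|p|||||a'|a'|U|||||i]; try exact: CDflt.
  exact: CMin.
Qed.

Lemma par_num k X : par (num k) X -> X = num k.
Proof.
elim: k X => [|k IH] X /= H; inversion H; subst => //.
inversion H2; subst => //. by rewrite (IH _ H4).
Qed.

Lemma par_lam_inv a b X : par (Lam a b) X -> exists b', X = Lam a b' /\ par b b'.
Proof. move=> H; inversion H; subst => //; by exists t'. Qed.

Lemma par_pair_inv a b X : par (Pair a b) X -> exists a' b', X = Pair a' b' /\ par a a' /\ par b b'.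
Proof. move=> H; inversion H; subst => //; by exists t', u'. Qed.

Lemma par_atom_inv t X : atomic t -> par t X -> X = t.
Proof. move=> At H; inversion H; subst => //; by rewrite -H0 in At. Qed.

Lemma par_app_inv t u X : par (App t u) X ->
  (exists t' u', X = App t' u' /\ par t t' /\ par u u') \/
  (match t with
   | Lam _ _ | MinC | App CupC _ => True
   | App (App (App GetC _) _) _ => True
   | App (App (IfC _) _) _ | App (App (RecC _) _) _ | App (App MkupdC _) _ => True
   | _ => False end).
Proof. move=> H; inversion H; subst; try (by right); left; by exists t', u'. Qed.

Lemma par_IfC_inv a c y X : (c = TrueC \/ c = FalseC) ->
  par (App (App (IfC a) c) y) X -> exists y', X = App (App (IfC a) c) y' /\ par y y'.
Proof.
move=> Hc H; case: (par_app_inv H) => [[t' [u' [-> [H1 H2]]]]|//].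
case: (par_app_inv H1) => [[t'' [u'' [-> [H3 H4]]]]|//].
have Ac : atomic c by case: Hc => ->.
rewrite (par_atom_inv _ H3) // (par_atom_inv Ac H4). by exists u'.
Qed.

Lemma par_Rec_inv a x y X :
  par (App (App (RecC a) x) y) X ->
  exists x' y', X = App (App (RecC a) x') y' /\ par x x' /\ par y y'.
Proof.
move=> H; case: (par_app_inv H) => [[t' [u' [-> [H1 H2]]]]|//].
case: (par_app_inv H1) => [[t'' [u'' [-> [H3 H4]]]]|//].
rewrite (par_atom_inv _ H3) //. by exists u'', u'.
Qed.

Lemma par_Succ_inv n X : par (App Succ n) X -> exists n', X = App Succ n' /\ par n n'.
Proof.
move=> H; case: (par_app_inv H) => [[t' [u' [-> [H1 H2]]]]|//].
rewrite (par_atom_inv _ H1) //. by exists u'.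
Qed.

Lemma par_cd t t' : par t t' -> par t' (cd t).
Proof.
elim => {t t'}.
- move=> t At; case: t At => //= *; by apply: p_atom.
- move=> t t' u u' Ht IH1 Hu IH2.
  case: (cdP t u).
  + by apply: p_app.
  + move=> a b Et; subst t. case: (par_lam_inv Ht) => [b' [Et' Hb]]; subst t'.
    case: (par_lam_inv IH1) => [b'' [[<-] Hb']]. by apply: p_beta.
  + move=> U Et Eu; subst t u. rewrite (par_atom_inv _ Ht) // (par_atom_inv _ Hu) //. exact: p_min.
  + move=> U1 U2 V Et Eu HV; subst t u.
    case: (par_app_inv Ht) => [[t1 [t2 [-> [H1 H2]]]]|//].
    rewrite (par_atom_inv _ H1) // (par_atom_inv _ H2) // (par_atom_inv _ Hu) //.
    exact: p_cup.
  + move=> a y Et; subst t. case: (par_IfC_inv (or_introl erefl) Ht) => [y' [Et' Hy]]; subst t'.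
    move: IH1 => /=. case/(par_IfC_inv (or_introl erefl)) => [y'' [[<-] H]].
    by apply: p_ift.
  + move=> a y Et; subst t. case: (par_IfC_inv (or_intror erefl) Ht) => [y' [Et' Hy]]; subst t'.
    by apply: p_iff.
  + move=> a x y Et Eu; subst t u. case: (par_Rec_inv Ht) => [x' [y' [Et' [Hx Hy]]]]; subst t'.
    rewrite (par_atom_inv _ Hu) //.
    move: IH1 => /=. case/par_Rec_inv => [x'' [y'' [[<- <-] [H1 H2]]]].
    by apply: p_rec0.
  + move=> a x y n Et Eu; subst t u. case: (par_Rec_inv Ht) => [x' [y' [Et' [Hx Hy]]]]; subst t'.
    case: (par_Succ_inv Hu) => [n' [Eu' Hn]]; subst u'.
    move: IH1 => /=. case/par_Rec_inv => [x'' [y'' [[<- <-] [H1 H2]]]].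
    move: IH2 => /=. case/par_Succ_inv => [n'' [[<-] H3]].
    by apply: p_recS.
  + move=> a n m V Et Eu HV; subst t u.
    case: (par_app_inv Ht) => [[t1 [t2 [-> [H1 H2]]]]|//].
    case: (par_app_inv H1) => [[t3 [t4 [-> [H3 H4]]]]|//].
    rewrite (par_atom_inv _ H3) // (par_num H4) (par_num H2) (par_num Hu).
    exact: p_mkupd.
  + move=> U a n d Et Eu; subst t u.
    case: (par_app_inv Ht) => [[t1 [t2 [-> [H1 H2]]]]|//].
    case: (par_app_inv H1) => [[t3 [t4 [-> [H3 H4]]]]|//].
    case: (par_app_inv H3) => [[t5 [t6 [-> [H5 H6]]]]|//].
    rewrite (par_atom_inv _ H5) // (par_atom_inv _ H6) // (par_num H4) (par_num H2) (par_num Hu).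
    exact: p_get.
- move=> a t t' _ IH /=. by apply: p_lam.
- move=> t t' u u' _ IH1 _ IH2 /=. by apply: p_pair.
- move=> t t' Ht IH. case: t Ht IH => /=; try (by move=> *; apply: p_pi0).
  move=> p q Ht IH. case: (par_pair_inv Ht) => [p' [q' [Et' [Hp Hq]]]]; subst t'.
  case: (par_pair_inv IH) => [p'' [q'' [[<- <-] [H1 H2]]]]. by apply: p_pi0r.
- move=> t t' Ht IH. case: t Ht IH => /=; try (by move=> *; apply: p_pi1).
  move=> p q Ht IH. case: (par_pair_inv Ht) => [p' [q' [Et' [Hp Hq]]]]; subst t'.
  case: (par_pair_inv IH) => [p'' [q'' [[<- <-] [H1 H2]]]]. by apply: p_pi1r.
- move=> a t t' u u' _ IH1 _ IH2 /=. exact: par_subst.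
- by move=> t t' u _ IH /=.
- by move=> t u u' _ IH /=.
- by move=> a t t' u _ IH /=.
- by move=> a t u u' _ IH /=.
- by move=> a t t' f _ IH /=.
- move=> a t t' f f' n n' _ IH1 _ IH2 _ IH3 /=.
  apply: p_app; apply: p_app => //; try apply: p_app => //; try apply: p_app => //;
  by apply: p_atom.
- move=> U /=. exact: par_refl.
- move=> U a n d /=. rewrite !isnum_num. exact: par_refl.
- move=> a n m V HV /=. rewrite !isnum_num (upd_of_val HV). exact: par_refl.
- move=> U1 U2 V HV /=. rewrite (upd_of_val HV). exact: par_refl.
Qed.

Lemma par_diamond t t1 t2 : par t t1 -> par t t2 -> exists t3, par t1 t3 /\ par t2 t3.
Proof. move=> H1 H2; exists (cd t); split; exact: par_cd. Qed.

Lemma strip t t1 t2 : par t t1 -> reds t t2 -> exists t3, reds t1 t3 /\ par t2 t3.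
Proof.
move=> H1 H2; elim: H2 t1 H1 => [x|x y z Hxy _ IH] t1 H1.
- exists t1; split => //; exact: reds_refl.
- have Hy := red1_par Hxy.
  case: (IH (cd x) (par_cd Hy)) => t3 [H3 H4].
  exists t3; split => //. apply: reds_trans (par_reds (par_cd H1)) H3.
Qed.

Lemma confluence t t1 t2 : reds t t1 -> reds t t2 -> exists t3, reds t1 t3 /\ reds t2 t3.
Proof.
move=> H1; elim: H1 t2 => [x|x y z Hxy _ IH] t2 H2.
- exists t2; split => //; exact: reds_refl.
- case: (strip (red1_par Hxy) H2) => t4 [H3 H4].
  case: (IH _ H3) => t3 [H5 H6]. exists t3; split => //.
  exact: reds_trans (par_reds H4) H6.
Qed.

Definition J X Y := exists Z, reds X Z /\ reds Y Z.

Lemma J_sym X Y : J X Y -> J Y X.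
Proof. by case=> Z [H1 H2]; exists Z. Qed.

Lemma J_app X Y u : J X Y -> J (App X u) (App Y u).
Proof. case=> Z [H1 H2]; exists (App Z u); split; apply: reds_app => //; exact: reds_refl. Qed.
Lemma J_pi0 X Y : J X Y -> J (Pi0 X) (Pi0 Y).
Proof. case=> Z [H1 H2]; exists (Pi0 Z); split; exact: reds_pi0. Qed.
Lemma J_pi1 X Y : J X Y -> J (Pi1 X) (Pi1 Y).
Proof. case=> Z [H1 H2]; exists (Pi1 Z); split; exact: reds_pi1. Qed.

Lemma reds_normal N X : normal N -> reds N X -> X = N.
Proof. move=> HN H; inversion H; subst => //. by case: (HN t'). Qed.

Lemma reds_normal_join X N Z : normal N -> reds X N -> reds X Z -> reds Z N.
Proof.
move=> HN H1 H2; case: (confluence H1 H2) => t3 [H3 H4].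
by rewrite (reds_normal HN H3) in H4.
Qed.

Lemma J_reds X Y N : J X Y -> reds X N -> normal N -> reds Y N.
Proof.
case=> Z [H1 H2] H HN. apply: reds_trans H2 _. exact: reds_normal_join H H1.
Qed.

Lemma teq_J X Y W : J X Y -> teq X W -> teq Y W.
Proof. move=> HJ [n [H1 [H2 H3]]]; exists n; split; [exact: J_reds HJ H1 H3 | by split]. Qed.

Lemma teq_J' X Y : teq X Y -> J X Y.
Proof. by case=> n [H1 [H2 _]]; exists n. Qed.

Lemma normal_True : normal TrueC. Proof. by move=> t H; inversion H. Qed.
Lemma normal_False : normal FalseC. Proof. by move=> t H; inversion H. Qed.

Definition bterm (b : bool) := if b then TrueC else FalseC.
Lemma normal_bterm b : normal (bterm b).
Proof. case: b; [exact: normal_True | exact: normal_False]. Qed.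

Lemma teq_bterm X b : teq X (bterm b) <-> reds X (bterm b).
Proof.
split.
- case=> n [H1 [H2 H3]]. by move: H1; rewrite (reds_normal (@normal_bterm b) H2).
- move=> H; exists (bterm b); split => //; split; [exact: reds_refl| exact: (@normal_bterm b)].
Qed.

Fixpoint cl (k : nat) (t : term) : bool :=
  match t with
  | Var n => n < k
  | App a b | Pair a b => cl k a && cl k b
  | Lam _ b => cl k.+1 b
  | Pi0 b | Pi1 b => cl k b
  | _ => true
  end.

Lemma cl_mono t k k' : k <= k' -> cl k t -> cl k' t.
Proof.
elim: t k k' => [n|t IH u IH2|a t IH|t IH u IH2|t IH|t IH|||||a|a|U|||||i] k k' h //=.
- move=> H; lia.
- by case/andP => /IH -> // /IH2 ->.
- by apply: IH.
- by case/andP => /IH -> // /IH2 ->.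
- by apply: IH.
- by apply: IH.
Qed.

Lemma typed_cl G t T : has_type G t T -> cl (size G) t.
Proof. by elim => //= *; apply/andP. Qed.

Lemma lift_cl t c d : cl c t -> lift d c t = t.
Proof.
elim: t c => [n|t IH u IH2|a t IH|t IH u IH2|t IH|t IH|||||a|a|U|||||i] c //=.
- by move=> H; ifs => //; lia.
- by case/andP => /IH -> /IH2 ->.
- by move/IH ->.
- by case/andP => /IH -> /IH2 ->.
- by move/IH ->.
- by move/IH ->.
Qed.

Lemma lift_closed t c d : cl 0 t -> lift d c t = t.
Proof. move=> H; apply: lift_cl; exact: cl_mono H. Qed.

Lemma subst_cl t k u : cl k t -> subst k u t = t.
Proof.
elim: t k => [n|t IH v IH2|a t IH|t IH v IH2|t IH|t IH|||||a|a|U|||||i] k //=.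
- by move=> H; ifs => //; lia.
- by case/andP => /IH -> /IH2 ->.
- by move/IH ->.
- by case/andP => /IH -> /IH2 ->.
- by move/IH ->.
- by move/IH ->.
Qed.

Lemma subst_closed t k u : cl 0 t -> subst k u t = t.
Proof. move=> H; apply: subst_cl; exact: cl_mono H. Qed.

Lemma cl_num k n : cl k (num n).
Proof. by elim: n. Qed.

Lemma tsub_lift s d c t : cl 0 s -> tsub s (lift d c t) = lift d c (tsub s t).
Proof.
move=> Hs; elim: t c => //= [n|t IH u IH2|a t IH|t IH u IH2|t IH|t IH|i] c;
  rewrite ?IH ?IH2 //.
- by ifs.
- by rewrite lift_closed // lift_num.
Qed.

Lemma tsub_subst s k u t : cl 0 s -> tsub s (subst k u t) = subst k (tsub s u) (tsub s t).
Proof.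
move=> Hs; elim: t k => //= [n|t IH v IH2|a t IH|t IH v IH2|t IH|t IH|i] k;
  rewrite ?IH ?IH2 //.
- ifs => //. by rewrite tsub_lift.
- by rewrite subst_closed // subst_num.
Qed.

Lemma tsub_substs s ws t : cl 0 s ->
  tsub s (substs ws t) = substs (map (tsub s) ws) (tsub s t).
Proof. move=> Hs; elim: ws t => //= w ws IH t. by rewrite IH tsub_subst. Qed.

Lemma substs_App ws a b : substs ws (App a b) = App (substs ws a) (substs ws b).
Proof. by elim: ws a b => //= w ws IH a b; rewrite IH. Qed.

Lemma substs_closed ws t : cl 0 t -> substs ws t = t.
Proof. elim: ws t => //= w ws IH t H. by rewrite subst_closed // IH. Qed.

Lemma subst_comm_closed P c j v w : cl 0 v -> cl 0 w ->
  subst c v (subst (c + j).+1 w P) = subst (c + j) w (subst c v P).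
Proof.
move=> Hv Hw.
elim: P c => //= [n|t IH t2 IH2|a t IH|t IH t2 IH2|t IH|t IH] c; rewrite ?IH ?IH2 //.
- ifs => //=; ifs => //=; try (f_equal; lia); try (exfalso; lia);
  rewrite ?lift_closed // ?subst_closed // ?lift_closed //.
Qed.

Lemma substs_insert wa wb w P : all (cl 0) wa -> cl 0 w ->
  substs (wa ++ wb) (subst (size wa) w P) = substs (wa ++ w :: wb) P.
Proof.
elim: wa P => //= v wa IH P /andP [Hv Hwa] Hw.
have := subst_comm_closed P 0 (size wa) Hv Hw. rewrite add0n => ->.
exact: IH.
Qed.

Inductive pw (R : term -> term -> Prop) : seq term -> seq term -> Prop :=
| pw_nil : pw R [::] [::]
| pw_cons a b l1 l2 : R a b -> pw R l1 l2 -> pw R (a :: l1) (b :: l2).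

Lemma pw_size R l1 l2 : pw R l1 l2 -> size l1 = size l2.
Proof. by elim => //= *; congr S. Qed.

Lemma pw_take R n l1 l2 : pw R l1 l2 -> pw R (take n l1) (take n l2).
Proof.
move=> H; elim: H n => [|a b m1 m2 Hab _ IH] [|n] /=; by constructor.
Qed.

Lemma pw_drop R n l1 l2 : pw R l1 l2 -> pw R (drop n l1) (drop n l2).
Proof.
move=> H; elim: H n => [|a b m1 m2 Hab H' IH] [|n] /=; try exact: IH; by constructor.
Qed.

Lemma pw_cat R a1 a2 b1 b2 : pw R a1 a2 -> pw R b1 b2 -> pw R (a1 ++ b1) (a2 ++ b2).
Proof. move=> H1 H2; elim: H1 => //= *; by constructor. Qed.

Lemma pw_refl R l : (forall x, R x x) -> pw R l l.
Proof. by move=> HR; elim: l => [|x l IH]; constructor. Qed.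

Lemma pw_map R (f : term -> term) l1 l2 :
  pw (fun a b => R (f a) (f b)) l1 l2 -> pw R (map f l1) (map f l2).
Proof. by elim => //= *; constructor. Qed.

Lemma par_substs vs ws T T' : pw par vs ws -> par T T' -> par (substs vs T) (substs ws T').
Proof.
move=> H; elim: H T T' => //= v w vs' ws' Hvw _ IH T T' HT.
apply: IH. exact: par_subst.
Qed.

Lemma reds_substs_r vs A B : reds A B -> reds (substs vs A) (substs vs B).
Proof.
elim => [x|x y z Hxy _ IH]; first exact: reds_refl.
apply: reds_trans IH. apply: par_reds. apply: par_substs.
- apply: pw_refl; exact: par_refl.
- exact: red1_par.
Qed.

Lemma reds_subst_l v z T : reds v z -> reds (subst 0 v T) (subst 0 z T).
Proof.
elim => [x|x y w Hxy _ IH]; first exact: reds_refl.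
apply: reds_trans IH. apply: par_reds. apply: par_subst; first exact: par_refl.
exact: red1_par.
Qed.

Lemma reds_substs vs zs T : pw reds vs zs -> reds (substs vs T) (substs zs T).
Proof.
move=> H; elim: H T => /= [T|v z vs' zs' Hvz _ IH T]; first exact: reds_refl.
apply: reds_trans (IH _). apply: reds_substs_r. exact: reds_subst_l.
Qed.

Lemma pw_J_common l1 l2 : pw J l1 l2 -> exists zs, pw reds l1 zs /\ pw reds l2 zs.
Proof.
elim => [|a b l1' l2' [z [Ha Hb]] _ [zs [H1 H2]]]; first by exists [::]; split; constructor.
by exists (z :: zs); split; constructor.
Qed.

Lemma notB_normal t' : ~ red1 notB t'.
Proof.
move=> H; rewrite /notB in H.
repeat match goal with H : red1 _ _ |- _ => inversion H; clear H; subst end.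
Qed.

Notation IfT a c y z := (App (App (App (IfC a) c) y) z).

Lemma If_inv X W : reds X W -> forall a c y z, X = IfT a c y z ->
  (exists c' y' z', W = IfT a c' y' z') \/
  (reds c TrueC /\ reds y W) \/ (reds c FalseC /\ reds z W).
Proof.
elim => [x|x x' w Hx Hw IH] a c y z EX.
- left; subst; by exists c, y, z.
- subst x. inversion Hx; subst.
  + by right; left; split; [apply: reds_refl|].
  + by right; right; split; [apply: reds_refl|].
  all: try (match goal with H : red1 (App (App (IfC _) _) _) _ |- _ => inversion H; subst end).
  all: try (match goal with H : red1 (App (IfC _) _) _ |- _ => inversion H; subst end).
  all: try (match goal with H : red1 (IfC _) _ |- _ => inversion H end).
  all: case: (IH _ _ _ _ erefl) => [E|[[H5 H6]|[H5 H6]]]; [by left| right; left | right; right];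
    split => //; (eapply reds_step; eassumption).
Qed.

Lemma notB_inv X W : reds X W -> forall Y, X = App notB Y ->
  (exists Y', W = App notB Y' /\ reds Y Y') \/
  (exists Y', reds Y Y' /\ reds (IfT TBool Y' FalseC TrueC) W).
Proof.
elim => [x|x x' w Hx Hw IH] Y EX.
- left; subst; exists Y; split => //; exact: reds_refl.
- subst x. inversion Hx; subst.
  + right; exists Y; split; first exact: reds_refl.
    move: Hw => /=. by rewrite lift0.
  + exfalso; eapply notB_normal; eassumption.
  + case: (IH _ erefl) => [[Y0 [-> HY]]|[Y0 [HY1 HY2]]].
    * left; exists Y0; split => //; eapply reds_step; eassumption.
    * right; exists Y0; split => //; eapply reds_step; eassumption.
Qed.

Lemma ev_notB Y b : reds (App notB Y) (bterm b) <-> reds Y (bterm (~~ b)).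
Proof.
split.
- case/(notB_inv)/(_ Y erefl) => [[Y' [E _]]|[Y' [H1 H2]]]; first by destruct b; discriminate.
  case: (If_inv H2 erefl) => [[c' [y' [z' E]]]|[[H3 H4]|[H3 H4]]]; first by destruct b; discriminate.
  + have E := reds_normal normal_False H4. destruct b; [discriminate E|]. exact: reds_trans H1 H3.
  + have E := reds_normal normal_True H4. destruct b; [|discriminate E]. exact: reds_trans H1 H3.
- move=> H. apply: reds_step; first exact: r_beta.
  rewrite /= lift0. apply: reds_trans.
  + apply: reds_app; last exact: reds_refl. apply: reds_app; last exact: reds_refl.
    apply: reds_app; last exact: H. exact: reds_refl.
  + destruct b; apply: red1_reds; [exact: r_iff| exact: r_ift].
Qed.

Lemma negs_S P n : negs P = n.+1 -> exists Q, P = App notB Q.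
Proof.
destruct P; try discriminate; simpl;
  repeat (match goal with |- context[match ?x with _ => _ end] => destruct x; try discriminate end).
by move=> _; eexists.
Qed.

Lemma perp_atom_cases P : perp_atom P = App notB P \/ exists Q, P = App notB Q /\ perp_atom P = Q.
Proof.
rewrite /perp_atom. case: ifP => Ho; first right; last by left.
case E: (negs P) Ho => [|n] //= _. case: (negs_S E) => Q EP. subst P.
by exists Q.
Qed.

Definition Rw (s a b : term) := cl 0 a /\ cl 0 b /\ J (tsub s a) (tsub s b).

Definition Ratom (s : term) (k : nat) (P1 P2 : term) : Prop :=
  forall ws1 ws2, size ws1 = k -> pw (Rw s) ws1 ws2 -> forall b,
    reds (tsub s (substs ws1 P1)) (bterm b) <-> reds (tsub s (substs ws2 P2)) (bterm b).

Lemma pw_impl (R R' : term -> term -> Prop) l1 l2 :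
  (forall a b, R a b -> R' a b) -> pw R l1 l2 -> pw R' l1 l2.
Proof. move=> HR; elim => *; constructor; auto. Qed.

Lemma pw_Rw_cl s l1 l2 : pw (Rw s) l1 l2 -> all (cl 0) l1 /\ all (cl 0) l2.
Proof. elim => //= a b m1 m2 [Ha [Hb _]] _ [H1 H2]; by rewrite Ha Hb H1 H2. Qed.

Lemma all_take_cl j l : all (cl 0) l -> all (cl 0) (take j l).
Proof. by rewrite -{1}(cat_take_drop j l) all_cat => /andP []. Qed.

Lemma Ratom_refl s k P : cl 0 s -> Ratom s k P P.
Proof.
move=> Hs ws1 ws2 _ H b. rewrite !tsub_substs //.
have : pw J (map (tsub s) ws1) (map (tsub s) ws2).
  apply: (@pw_map J (tsub s)). apply: pw_impl H. by move=> a c [_ [_ HJ]].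
case/pw_J_common => zs [H1 H2].
have E1 := reds_substs (tsub s P) H1. have E2 := reds_substs (tsub s P) H2.
split => H'.
- apply: reds_trans E2 _. exact: reds_normal_join (@normal_bterm b) H' E1.
- apply: reds_trans E1 _. exact: reds_normal_join (@normal_bterm b) H' E2.
Qed.

Lemma Ratom_subst s m P1 P2 j w1 w2 : Ratom s m.+1 P1 P2 -> j <= m -> Rw s w1 w2 ->
  Ratom s m (subst j w1 P1) (subst j w2 P2).
Proof.
move=> HR hj Hw ws1 ws2 Hsz H b.
have Hsz2 : size ws2 = m by rewrite -(pw_size H).
case: (pw_Rw_cl H) => Hc1 Hc2.
case: (Hw) => Hw1 [Hw2 _].
have E1 : size (take j ws1) = j by rewrite size_takel // Hsz.
have E2 : size (take j ws2) = j by rewrite size_takel // Hsz2.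
have I1 := @substs_insert (take j ws1) (drop j ws1) w1 P1 (all_take_cl j Hc1) Hw1.
have I2 := @substs_insert (take j ws2) (drop j ws2) w2 P2 (all_take_cl j Hc2) Hw2.
rewrite E1 cat_take_drop in I1. rewrite E2 cat_take_drop in I2.
rewrite I1 I2. apply: HR.
- rewrite size_cat /= size_drop E1 Hsz. lia.
- apply: pw_cat; first exact: pw_take.
  constructor => //. exact: pw_drop.
Qed.

Lemma cl_notB : cl 0 notB. Proof. by []. Qed.

Lemma tsub_notB s X : tsub s (App notB X) = App notB (tsub s X).
Proof. by []. Qed.

Lemma perp_ev s ws P b :
  reds (tsub s (substs ws (perp_atom P))) (bterm b) <->
  reds (tsub s (substs ws P)) (bterm (~~ b)).
Proof.
case: (perp_atom_cases P) => [->|[Q [-> ->]]].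
- by rewrite substs_App (substs_closed _ cl_notB) tsub_notB ev_notB.
- by rewrite substs_App (substs_closed _ cl_notB) tsub_notB ev_notB negbK.
Qed.

Lemma Ratom_perp s k P1 P2 : Ratom s k P1 P2 -> Ratom s k (perp_atom P1) (perp_atom P2).
Proof. move=> HR ws1 ws2 Hs H b. rewrite !perp_ev. exact: HR. Qed.

Inductive Sim (s : term) : nat -> formula -> formula -> Prop :=
| SAtom k P1 P2 : Ratom s k P1 P2 -> Sim s k (FAtom P1) (FAtom P2)
| SAnd k A1 A2 B1 B2 : Sim s k A1 A2 -> Sim s k B1 B2 -> Sim s k (FAnd A1 B1) (FAnd A2 B2)
| SOr k A1 A2 B1 B2 : Sim s k A1 A2 -> Sim s k B1 B2 -> Sim s k (FOr A1 B1) (FOr A2 B2)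
| SImp k A1 A2 B1 B2 : Sim s k A1 A2 -> Sim s k B1 B2 -> Sim s k (FImp A1 B1) (FImp A2 B2)
| SCoimp k A1 A2 B1 B2 : Sim s k A1 A2 -> Sim s k B1 B2 -> Sim s k (FCoimp A1 B1) (FCoimp A2 B2)
| SAll k a A1 A2 : Sim s k.+1 A1 A2 -> Sim s k (FAll a A1) (FAll a A2)
| SEx k a A1 A2 : Sim s k.+1 A1 A2 -> Sim s k (FEx a A1) (FEx a A2).

Lemma Sim_refl s k F : cl 0 s -> Sim s k F F.
Proof.
move=> Hs; elim: F k => *; constructor; auto. exact: Ratom_refl.
Qed.

Lemma Sim_fsubst s n F1 F2 : Sim s n F1 F2 -> forall m j w1 w2, n = m.+1 -> j <= m ->
  Rw s w1 w2 -> Sim s m (fsubst j w1 F1) (fsubst j w2 F2).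
Proof.
elim => {n F1 F2} /=.
- move=> k P1 P2 HR m j w1 w2 Ek hj Hw. subst k. constructor. exact: Ratom_subst.
- move=> *; constructor; eauto.
- move=> *; constructor; eauto.
- move=> *; constructor; eauto.
- move=> *; constructor; eauto.
- move=> k a A1 A2 _ IH m j w1 w2 Ek hj Hw. constructor. apply: IH => //; by rewrite Ek.
- move=> k a A1 A2 _ IH m j w1 w2 Ek hj Hw. constructor. apply: IH => //; by rewrite Ek.
Qed.

Lemma Sim_perp s k F1 F2 : Sim s k F1 F2 -> Sim s k (perp F1) (perp F2).
Proof.
elim => /= *; constructor; auto. exact: Ratom_perp.
Qed.

Lemma fsize_Sim s k F1 F2 : Sim s k F1 F2 -> fsize F1 = fsize F2.
Proof. by elim => //= *; congruence. Qed.

Lemma fsize_fsubst k u F : fsize (fsubst k u F) = fsize F.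
Proof. by elim: F k => //= *; congruence. Qed.

Lemma Sim_rtype_f s n : forall k F1 F2, Sim s k F1 F2 -> rtype_f n F1 = rtype_f n F2.
Proof.
elim: n => [|n IH] k F1 F2 H //=.
case: H => /= *; try (congr TProd || congr TArr); try (congr TProd);
  repeat match goal with |- context [rtype_f n _] => idtac end;
  by repeat (first [ congr TProd | congr TArr | (apply: IH; eassumption)
                   | (apply: IH; apply: Sim_perp; eassumption) | reflexivity ]).
Qed.

Lemma rtype_Sim s k F1 F2 : Sim s k F1 F2 -> rtype F1 = rtype F2.
Proof. move=> H; rewrite /rtype (fsize_Sim H). exact: Sim_rtype_f H. Qed.

Lemma J_refl X : J X X.
Proof. exists X; split; exact: reds_refl. Qed.

Lemma Sim_inv s k F1 F2 : Sim s k F1 F2 ->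
  match F1, F2 with
  | FAtom P1, FAtom P2 => Ratom s k P1 P2
  | FAnd A1 B1, FAnd A2 B2 | FOr A1 B1, FOr A2 B2
  | FImp A1 B1, FImp A2 B2 | FCoimp A1 B1, FCoimp A2 B2 => Sim s k A1 A2 /\ Sim s k B1 B2
  | FAll a1 A1, FAll a2 A2 | FEx a1 A1, FEx a2 A2 => a1 = a2 /\ Sim s k.+1 A1 A2
  | _, _ => False
  end.
Proof. by case. Qed.

Lemma Jt_pi0 s t1 t2 : J (tsub s t1) (tsub s t2) -> J (tsub s (Pi0 t1)) (tsub s (Pi0 t2)).
Proof. exact: J_pi0. Qed.
Lemma Jt_pi1 s t1 t2 : J (tsub s t1) (tsub s t2) -> J (tsub s (Pi1 t1)) (tsub s (Pi1 t2)).
Proof. exact: J_pi1. Qed.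
Lemma Jt_app s u t1 t2 : J (tsub s t1) (tsub s t2) -> J (tsub s (App t1 u)) (tsub s (App t2 u)).
Proof. exact: J_app. Qed.

Lemma real_Sim sk code Gam s n : cl 0 s -> forall F1 F2 t1 t2, Sim s 0 F1 F2 ->
  J (tsub s t1) (tsub s t2) ->
  (real_f sk code Gam n s t1 F1 <-> real_f sk code Gam n s t2 F2).
Proof.
move=> Hs; elim: n => [|n IH] F1 F2 t1 t2 HS HJ //=.
have HJ' := J_sym HJ.
move: (Sim_inv HS); clear HS.
case: F1 => [P1|A1 B1|A1 B1|A1 B1|A1 B1|a A1|a A1];
  case: F2 => [P2|A2 B2|A2 B2|A2 B2|A2 B2|a' A2|a' A2] //=.
- move=> H.
  have HR : forall b, reds (tsub s P1) (bterm b) <-> reds (tsub s P2) (bterm b).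
    move=> b; exact: (H [::] [::] erefl (pw_nil _) b).
  split => [[Ha Hb]|[Ha Hb]]; split.
  + move=> U HU; apply: Ha; exact: teq_J HJ' HU.
  + move=> U HU H0. apply/(teq_bterm _ true)/HR/(teq_bterm _ true). apply: Hb H0.
    exact: teq_J HJ' HU.
  + move=> U HU; apply: Ha; exact: teq_J HJ HU.
  + move=> U HU H0. apply/(teq_bterm _ true)/HR/(teq_bterm _ true). apply: Hb H0.
    exact: teq_J HJ HU.
- case=> H2 H4.
  rewrite (IH _ _ _ _ H2 (Jt_pi0 HJ)) (IH _ _ _ _ H4 (Jt_pi1 HJ)). by [].
- case=> H2 H4.
  rewrite (IH _ _ _ _ H2 (Jt_pi0 (Jt_pi1 HJ))) (IH _ _ _ _ H4 (Jt_pi1 (Jt_pi1 HJ))).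
  split => [[[Ht Hr]|[Ht Hr]]|[[Ht Hr]|[Ht Hr]]].
  + left; split => //; exact: teq_J (Jt_pi0 HJ) Ht.
  + right; split => //; exact: teq_J (Jt_pi0 HJ) Ht.
  + left; split => //; exact: teq_J (Jt_pi0 HJ') Ht.
  + right; split => //; exact: teq_J (Jt_pi0 HJ') Ht.
- case=> H2 H4.
  rewrite (rtype_Sim H2).
  split => Hr u Hu Hau.
  + rewrite -(IH _ _ _ _ H4 (Jt_app u HJ)). apply: Hr => //.
    by rewrite (IH _ _ _ _ H2 (J_refl _)).
  + rewrite (IH _ _ _ _ H4 (Jt_app u HJ)). apply: Hr => //.
    by rewrite -(IH _ _ _ _ H2 (J_refl _)).
- case=> H2 H4.
  rewrite (IH _ _ _ _ H2 (Jt_pi0 HJ)) (IH _ _ _ _ (Sim_perp H4) (Jt_pi1 HJ)). by [].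
- case=> Ea H1; subst a'.
  have Hsub : forall u, has_type [::] u a -> Sim s 0 (fsubst 0 u A1) (fsubst 0 u A2).
    move=> u Hu. apply: (Sim_fsubst H1) => //. split; [|split].
    + exact: (typed_cl Hu).
    + exact: (typed_cl Hu).
    + exact: J_refl.
  split => Hr u Hu Hi.
  + rewrite -(IH _ _ _ _ (Hsub _ Hu) (Jt_app u HJ)). exact: Hr.
  + rewrite (IH _ _ _ _ (Hsub _ Hu) (Jt_app u HJ)). exact: Hr.
- case=> Ea H1; subst a'.
  have Hsub : forall u, has_type [::] u a -> Sim s 0 (fsubst 0 u A1) (fsubst 0 u A2).
    move=> u Hu. apply: (Sim_fsubst H1) => //. split; [|split].
    + exact: (typed_cl Hu).
    + exact: (typed_cl Hu).
    + exact: J_refl.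
  split => [[u [Hu [Hi [Ht Hr]]]]|[u [Hu [Hi [Ht Hr]]]]]; exists u; do 3 (split => //).
  + exact: teq_J (Jt_pi0 HJ) Ht.
  + by rewrite -(IH _ _ _ _ (Hsub _ Hu) (Jt_pi1 HJ)).
  + exact: teq_J (Jt_pi0 HJ') Ht.
  + by rewrite (IH _ _ _ _ (Hsub _ Hu) (Jt_pi1 HJ)).
Qed.

Local Close Scope fset_scope.

Theorem mainTheorem2
  (sk : nat -> formula -> nat) (code : nat -> term) (Gam : seq (nat * formula))
  (Hsk : skolem_ok sk) (Hcode : code_ok code)
  (HGam : forall n A, List.In (n, A) Gam -> arith A /\ fwf (nseq n.+1 TN) A)
  (s : term) (Hs : is_state s)
  (a : ty) (B : formula) (HB : fwf [:: a] B)
  (t1 t2 u1 u2 : term)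
  (Hu1 : has_type [::] u1 a) (Hu2 : has_type [::] u2 a)
  (Ht1 : has_type [::] t1 (rtype (fsubst 0 u1 B)))
  (Ht2 : has_type [::] t2 (rtype (fsubst 0 u2 B))) :
  teq (tsub s t1) (tsub s t2) -> teq (tsub s u1) (tsub s u2) ->
  (realizes sk code Gam s t1 (fsubst 0 u1 B) <-> realizes sk code Gam s t2 (fsubst 0 u2 B)).
Proof.
move=> Ht Hu.
have Hs0 : cl 0 s by case: Hs => /typed_cl.
have Hc1 : cl 0 u1 := typed_cl Hu1.
have Hc2 : cl 0 u2 := typed_cl Hu2.
have HS : Sim s 0 (fsubst 0 u1 B) (fsubst 0 u2 B).
  apply: (Sim_fsubst (@Sim_refl s 1 B Hs0)) => //. split; [|split] => //. exact: teq_J' Hu.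
rewrite /realizes !fsize_fsubst. exact: (real_Sim sk code Gam (fsize B) Hs0 HS (teq_J' Ht)).
Qed.
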